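(* For every integer $k\ge 2$ there exists a constant $c_k$ depending only on $k$ such that the following holds: if $\Gamma$ is any set of configurations containing at least one configuration $(S,(T_1,T_2))$ with $|S|=k$ (i.e. a $(2,k)$-configuration), then for all positive integers $n,m$ the number $a(n,m,\Gamma)$ of $(n,m)$-elections on the candidate set $\{c_1,\ldots,c_m\}$ avoiding every configuration in $\Gamma$ satisfies $a(n,m,\Gamma)\le m!\cdot c_k^{(n-1)m}$.
   Context: An $(n,m)$-election $(C,\mathcal{P})$ is a set $C$ of $m$ candidates with an ordered $n$-tuple $\mathcal{P}=(V_1,\ldots,V_n)$ of total orders on $C$ (so there are $(m!)^n$ elections on a fixed candidate set; elections differing only in the order of votes are distinct). An $(l,k)$-configuration $(S,\mathcal{T})$ is a set $S$ with $|S|=k$ and a tuple $\mathcal{T}=(T_1,\ldots,T_l)$ of total orders on $S$. The election contains the configuration if there are injective maps $f:\{1,\ldots,l\}\to\{1,\ldots,n\}$ and $g:S\to C$ such that for all distinct $x,y\in S$ and all $i$, $T_i$ ranking $x$ above $y$ implies $V_{f(i)}$ ranks $g(x)$ above $g(y)$; otherwise it avoids the configuration. *)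

(* Defs.v *)
From Stdlib Require Import ClassicalEpsilon.
From mathcomp Require Import all_boot all_fingroup.
Set Implicit Arguments. Unset Strict Implicit. Unset Printing Implicit Defensive.

(* A total order on a finite set 'I_k is encoded by its rank permutation
   r : {perm 'I_k}: x is ranked above y iff r x < r y (rank 0 = top).
   This is a bijection between total orders on 'I_k and {perm 'I_k}. *)
Definition ranks_above (k : nat) (r : {perm 'I_k}) (x y : 'I_k) : bool :=
  (r x < r y)%N.

Definition election (n m : nat) := {ffun 'I_n -> {perm 'I_m}}.

(* An (l,k)-configuration; the underlying k-set S is taken to be 'I_k
   (containment is invariant under relabelling S). *)
Record config := Config {
  cfg_l : nat;
  cfg_k : nat;
  cfg_T : {ffun 'I_cfg_l -> {perm 'I_cfg_k}}
}.

Definition contains (n m : nat) (P : election n m) (C : config) : Prop :=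
  exists (f : 'I_(cfg_l C) -> 'I_n) (g : 'I_(cfg_k C) -> 'I_m),
    injective f /\ injective g /\
    forall (i : 'I_(cfg_l C)) (x y : 'I_(cfg_k C)), x != y ->
      ranks_above (cfg_T C i) x y -> ranks_above (P (f i)) (g x) (g y).

Definition avoids_all (n m : nat) (Gamma : config -> Prop) (P : election n m)
  : Prop := forall C, Gamma C -> ~ contains P C.

Definition pbool (P : Prop) : bool :=
  if excluded_middle_informative P then true else false.

Definition a_count (n m : nat) (Gamma : config -> Prop) : nat :=
  #|[set P : election n m | pbool (avoids_all Gamma P) ]|.

(* Main.v *)
Require Import Defs.
From Stdlib Require Import ClassicalEpsilon.
From mathcomp Require Import all_boot all_fingroup.
From mathcomp Require Import zify.
Set Implicit Arguments. Unset Strict Implicit. Unset Printing Implicit Defensive.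
Lemma srt N (U : {set 'I_N}) : sorted (fun x y : 'I_N => x < y) (enum U).
Proof.
have h : sorted (fun x y : 'I_N => x < y) (enum 'I_N).
  by have := iota_ltn_sorted 0 N; rewrite -val_enum_ord sorted_map.
rewrite /enum_mem -enumT. apply: sorted_filter => //. exact: ltn_trans.
Qed.
Lemma ord_pick N (U : {set 'I_N}) k : k <= #|U| ->
  exists h : 'I_k -> 'I_N, (forall i j : 'I_k, i < j -> h i < h j) /\ forall i, h i \in U.
Proof.
case: k => [|k] hk.
  have h0 : 'I_0 -> 'I_N by case.
  by exists h0; split; case.
have : 0 < #|U| by apply: leq_trans hk.
case/card_gt0P => x0 _.
have hs : forall i : 'I_k.+1, i < size (enum U).
  by move=> i; rewrite -cardE; apply: leq_trans hk.
have tr : transitive (fun x y : 'I_N => x < y) by move=> a b c; apply: ltn_trans.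
exists (fun i => nth x0 (enum U) i); split.
  move=> i j lij.
  have := @sorted_ltn_nth _ (fun x y : 'I_N => x < y) tr x0 (enum U) (srt U) i j.
  by rewrite !inE !hs; apply.
by move=> i; rewrite -mem_enum mem_nth.
Qed.

Definition incr k N (r : 'I_k -> 'I_N) := forall i j : 'I_k, i < j -> r i < r j.

Definition cont k (p : {perm 'I_k}) N (A : {set 'I_N * 'I_N}) : bool :=
 [exists r : {ffun 'I_k -> 'I_N}, exists c : {ffun 'I_k -> 'I_N},
   [forall i : 'I_k, forall j : 'I_k, (i < j) ==> ((r i < r j) && (c i < c j))]
   && [forall i, (r i, c (p i)) \in A]].

Lemma contI k (p : {perm 'I_k}) N (A : {set 'I_N * 'I_N}) (r c : 'I_k -> 'I_N) :
  incr r -> incr c -> (forall i, (r i, c (p i)) \in A) -> cont p A.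
Proof.
move=> hr hc hA; apply/existsP; exists (finfun r); apply/existsP; exists (finfun c).
apply/andP; split; apply/forallP => i; rewrite ?ffunE //.
by apply/forallP => j; apply/implyP => lij; rewrite !ffunE hr ?hc.
Qed.

Lemma contE k (p : {perm 'I_k}) N (A : {set 'I_N * 'I_N}) : cont p A ->
  exists r c : 'I_k -> 'I_N, incr r /\ incr c /\ forall i, (r i, c (p i)) \in A.
Proof.
case/existsP => r /existsP [c /andP [/forallP h1 /forallP h2]].
exists r, c; split; [|split] => //.
- by move=> i j lij; have /forallP/(_ j)/implyP/(_ lij)/andP[] := h1 i.
- by move=> i j lij; have /forallP/(_ j)/implyP/(_ lij)/andP[] := h1 i.
Qed.

Definition dv q N (x : 'I_N) : 'I_N := Ordinal (leq_ltn_trans (leq_div x q) (ltn_ord x)).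
Definition phi q N (a : 'I_N * 'I_N) := (dv q a.1, dv q a.2).
Arguments dv q {N} x.
Arguments phi q {N} a.

Lemma lt_dv q N (x y : 'I_N) : dv q x < dv q y -> x < y.
Proof.
rewrite /= => h; rewrite ltnNge; apply/negP => /(leq_div2r q).
by rewrite leqNgt h.
Qed.

Lemma cont_phi k (p : {perm 'I_k}) q N (A : {set 'I_N * 'I_N}) :
  cont p (phi q @: A) -> cont p A.
Proof.
case/contE => r [c [hr [hc hA]]].
have : forall i, exists a, (a \in A) && (phi q a == (r i, c (p i))).
  by move=> i; have /imsetP[a aA e] := hA i; exists a; rewrite aA e eqxx.
case/fin_all_exists => a ha.
have e1 : forall i, dv q (a i).1 = r i.
  by move=> i; have /andP[_ /eqP ei] := ha i; rewrite -[r i]/((r i, c (p i)).1) -ei.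
have e2 : forall i, dv q (a i).2 = c (p i).
  by move=> i; have /andP[_ /eqP ei] := ha i; rewrite -[c (p i)]/((r i, c (p i)).2) -ei.
apply: (@contI _ _ _ _ (fun i => (a i).1) (fun j => (a ((p^-1)%g j)).2)).
- by move=> i j lij; apply: (@lt_dv q); rewrite !e1 hr.
- by move=> i j lij; apply: (@lt_dv q); rewrite !e2 !permKV hc.
- by move=> i; rewrite permK -surjective_pairing; have /andP[] := ha i.
Qed.

Lemma card_lt N (D : {set 'I_N}) s : (forall x, x \in D -> x < s) -> #|D| <= s.
Proof.
move=> hD; case: (leqP s N) => hsN.
  have sub : D \subset [set widen_ord hsN i | i : 'I_s].
    apply/subsetP => x xD; apply/imsetP; exists (Ordinal (hD x xD)) => //.
    exact: val_inj.
  by apply: leq_trans (subset_leq_card sub) _; apply: leq_trans (leq_imset_card _ _) _; rewrite card_ord.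
by apply: leq_trans (max_card _) _; rewrite card_ord ltnW.
Qed.

Lemma card_blk N (D : {set 'I_N}) q j : 0 < q -> (forall x, x \in D -> x %/ q = j) -> #|D| <= q.
Proof.
move=> q0 hD.
have inj : {in D &, injective (fun x : 'I_N => Ordinal (ltn_pmod x q0))}.
  move=> x y xD yD [e]; apply: val_inj => /=.
  by rewrite (divn_eq x q) (divn_eq y q) e !hD.
by rewrite -(card_in_imset inj); apply: leq_trans (max_card _) _; rewrite card_ord.
Qed.

Lemma pigeon (T U : finType) (D : {set T}) (f : T -> U) m :
  (forall v, #|[set x in D | f x == v]| <= m) -> #|D| <= m * #|f @: D|.
Proof.
move=> hf; rewrite -sum1_card (partition_big_imset f) /= mulnC -sum_nat_const.
apply: leq_sum => v _; rewrite sum1_card.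
by apply: leq_trans (hf v); apply: subset_leq_card; apply/subsetP => x; rewrite !inE.
Qed.

Definition Ab q N (A : {set 'I_N * 'I_N}) b := [set a in A | phi q a == b].
Definition cols q N (A : {set 'I_N * 'I_N}) b := [set a.2 | a in Ab q A b].
Definition rows q N (A : {set 'I_N * 'I_N}) b := [set a.1 | a in Ab q A b].

Lemma core_wide k (p : {perm 'I_k}) q N (A : {set 'I_N * 'I_N}) (F : {set 'I_N * 'I_N}) (S : {set 'I_N}) :
  k <= #|S| -> k <= #|[set b.1 | b in F]| -> (forall b, b \in F -> S \subset cols q A b) ->
  cont p A.
Proof.
move=> hS hF hsub.
have [rho [hr rR]] := ord_pick hF.
have [sig [hs sS]] := ord_pick hS.
have : forall i, exists a, [&& a \in A, dv q a.1 == rho i & a.2 == sig (p i)].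
  move=> i; have /imsetP[b bF eb] := rR i.
  have /imsetP[a] := subsetP (hsub b bF) _ (sS (p i)).
  rewrite inE => /andP[aA /eqP ea] es.
  by exists a; rewrite aA eb -ea es !eqxx.
case/fin_all_exists => a ha.
apply: (@contI _ _ _ _ (fun i => (a i).1) sig) => //.
  move=> i j lij; apply: (@lt_dv q).
  by have /and3P[_ /eqP -> _] := ha i; have /and3P[_ /eqP -> _] := ha j; apply: hr.
by move=> i; have /and3P[aA _ /eqP <-] := ha i; rewrite -surjective_pairing.
Qed.

Lemma core_tall k (p : {perm 'I_k}) q N (A : {set 'I_N * 'I_N}) (F : {set 'I_N * 'I_N}) (S : {set 'I_N}) :
  k <= #|S| -> k <= #|[set b.2 | b in F]| -> (forall b, b \in F -> S \subset rows q A b) ->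
  cont p A.
Proof.
move=> hS hF hsub.
have [kap [hk kR]] := ord_pick hF.
have [sig [hs sS]] := ord_pick hS.
have : forall i, exists a, [&& a \in A, dv q a.2 == kap (p i) & a.1 == sig i].
  move=> i; have /imsetP[b bF eb] := kR (p i).
  have /imsetP[a] := subsetP (hsub b bF) _ (sS i).
  rewrite inE => /andP[aA /eqP ea] es.
  by exists a; rewrite aA eb -ea es !eqxx.
case/fin_all_exists => a ha.
apply: (@contI _ _ _ _ sig (fun j => (a ((p^-1)%g j)).2)) => //.
  move=> i j lij; apply: (@lt_dv q).
  have /and3P[_ /eqP -> _] := ha ((p^-1)%g i); have /and3P[_ /eqP -> _] := ha ((p^-1)%g j).
  by rewrite !permKV; apply: hk.
by move=> i; rewrite permK; have /and3P[aA _ /eqP <-] := ha i; rewrite -surjective_pairing.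
Qed.

Lemma cols_blk q N (A : {set 'I_N * 'I_N}) b y : y \in cols q A b -> y %/ q = b.2.
Proof. by case/imsetP => a; rewrite inE => /andP[_ /eqP <-] ->. Qed.
Lemma rows_blk q N (A : {set 'I_N * 'I_N}) b y : y \in rows q A b -> y %/ q = b.1.
Proof. by case/imsetP => a; rewrite inE => /andP[_ /eqP <-] ->. Qed.

Lemma wide_col k (p : {perm 'I_k}) q N (A : {set 'I_N * 'I_N}) (j : 'I_N) :
  0 < k -> 0 < q -> ~~ cont p A ->
  #|[set b in phi q @: A | (k <= #|cols q A b|) && (b.2 == j)]| <= k.-1 * 2 ^ q.
Proof.
move=> k0 q0 nc; set D := [set b in _ | _].
apply: leq_trans (pigeon (f := cols q A) (m := k.-1) _) _.
  move=> S; set F := [set x in D | _].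
  rewrite -ltnS prednK //; rewrite ltnNge; apply: contra nc => hF.
  have : 0 < #|F| by apply: leq_trans hF.
  case/card_gt0P => b0; rewrite !inE => /andP[/andP[_ /andP[w0 _]] /eqP e0].
  apply: (@core_wide k p q N A F S); first by rewrite -e0.
    rewrite card_in_imset //.
    move=> x y; rewrite !inE => /andP[/andP[_ /andP[_ /eqP ex]] _] /andP[/andP[_ /andP[_ /eqP ey]] _] e.
    by rewrite [x]surjective_pairing [y]surjective_pairing e ex ey.
  by move=> b; rewrite !inE => /andP[_ /eqP ->].
rewrite leq_mul2l; apply/orP; right.
set CR := [set y : 'I_N | y %/ q == j].
have sub : cols q A @: D \subset powerset CR.
  apply/subsetP => S /imsetP[b]; rewrite !inE => /andP[_ /andP[_ /eqP ej]] ->.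
  by apply/subsetP => y yc; rewrite inE (cols_blk yc) ej.
apply: leq_trans (subset_leq_card sub) _; rewrite card_powerset leq_pexp2l //.
by apply: (@card_blk _ _ q j) => // y; rewrite inE => /eqP.
Qed.

Lemma tall_row k (p : {perm 'I_k}) q N (A : {set 'I_N * 'I_N}) (j : 'I_N) :
  0 < k -> 0 < q -> ~~ cont p A ->
  #|[set b in phi q @: A | (k <= #|rows q A b|) && (b.1 == j)]| <= k.-1 * 2 ^ q.
Proof.
move=> k0 q0 nc; set D := [set b in _ | _].
apply: leq_trans (pigeon (f := rows q A) (m := k.-1) _) _.
  move=> S; set F := [set x in D | _].
  rewrite -ltnS prednK //; rewrite ltnNge; apply: contra nc => hF.
  have : 0 < #|F| by apply: leq_trans hF.
  case/card_gt0P => b0; rewrite !inE => /andP[/andP[_ /andP[w0 _]] /eqP e0].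
  apply: (@core_tall k p q N A F S); first by rewrite -e0.
    rewrite card_in_imset //.
    move=> x y; rewrite !inE => /andP[/andP[_ /andP[_ /eqP ex]] _] /andP[/andP[_ /andP[_ /eqP ey]] _] e.
    by rewrite [x]surjective_pairing [y]surjective_pairing e ex ey.
  by move=> b; rewrite !inE => /andP[_ /eqP ->].
rewrite leq_mul2l; apply/orP; right.
set CR := [set y : 'I_N | y %/ q == j].
have sub : rows q A @: D \subset powerset CR.
  apply/subsetP => S /imsetP[b]; rewrite !inE => /andP[_ /andP[_ /eqP ej]] ->.
  by apply/subsetP => y yc; rewrite inE (rows_blk yc) ej.
apply: leq_trans (subset_leq_card sub) _; rewrite card_powerset leq_pexp2l //.
by apply: (@card_blk _ _ q j) => // y; rewrite inE => /eqP.
Qed.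

Lemma wide_all k (p : {perm 'I_k}) q N (A : {set 'I_N * 'I_N}) s :
  0 < k -> 0 < q -> ~~ cont p A -> (forall b, b \in phi q @: A -> b.2 < s) ->
  #|[set b in phi q @: A | k <= #|cols q A b|]| <= (k.-1 * 2 ^ q) * s.
Proof.
move=> k0 q0 nc hs.
apply: leq_trans (pigeon (f := snd) (m := k.-1 * 2 ^ q) _) _.
  move=> v; apply: leq_trans (wide_col v k0 q0 nc); apply: subset_leq_card.
  by apply/subsetP => b; rewrite !inE andbA.
rewrite leq_mul2l; apply/orP; right; apply: card_lt => y /imsetP[b].
by rewrite inE => /andP[/hs hb _] ->.
Qed.

Lemma tall_all k (p : {perm 'I_k}) q N (A : {set 'I_N * 'I_N}) s :
  0 < k -> 0 < q -> ~~ cont p A -> (forall b, b \in phi q @: A -> b.1 < s) ->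
  #|[set b in phi q @: A | k <= #|rows q A b|]| <= (k.-1 * 2 ^ q) * s.
Proof.
move=> k0 q0 nc hs.
apply: leq_trans (pigeon (f := fst) (m := k.-1 * 2 ^ q) _) _.
  move=> v; apply: leq_trans (tall_row v k0 q0 nc); apply: subset_leq_card.
  by apply/subsetP => b; rewrite !inE andbA.
rewrite leq_mul2l; apply/orP; right; apply: card_lt => y /imsetP[b].
by rewrite inE => /andP[/hs hb _] ->.
Qed.

Lemma sum_if (T : finType) (B : {set T}) (P : pred T) c :
  \sum_(b in B) (if P b then c else 0) = #|[set b in B | P b]| * c.
Proof.
rewrite -big_mkcondr /= sum_nat_const; congr (_ * _).
by apply: eq_card => x; rewrite !inE.
Qed.

Lemma Ab_bound k q N (A : {set 'I_N * 'I_N}) b : 0 < k -> 0 < q ->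
  #|Ab q A b| <= k.-1 * k.-1 + (if k <= #|cols q A b| then q * q else 0)
                 + (if k <= #|rows q A b| then q * q else 0).
Proof.
move=> k0 q0.
have sub : Ab q A b \subset setX (rows q A b) (cols q A b).
  by apply/subsetP => a aA; rewrite inE !imset_f.
apply: leq_trans (subset_leq_card sub) _; rewrite cardsX.
have hr : #|rows q A b| <= q by apply: (@card_blk _ _ q b.1) => // y /rows_blk.
have hc : #|cols q A b| <= q by apply: (@card_blk _ _ q b.2) => // y /cols_blk.
case: ifP => w.
  by apply: leq_trans (leq_mul hr hc) _; rewrite -addnA addnCA leq_addr.
case: ifP => t.
  by apply: leq_trans (leq_mul hr hc) _; rewrite leq_addl.
rewrite !addn0; apply: leq_mul; rewrite -ltnS.
  by rewrite prednK // ltnNge t.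
by rewrite prednK // ltnNge w.
Qed.

Lemma MT_step k (p : {perm 'I_k}) q N (A : {set 'I_N * 'I_N}) s :
  0 < k -> 0 < q -> ~~ cont p A ->
  (forall b, b \in phi q @: A -> (b.1 < s) && (b.2 < s)) ->
  #|A| <= k.-1 * k.-1 * #|phi q @: A| + 2 * (q * q * ((k.-1 * 2 ^ q) * s)).
Proof.
move=> k0 q0 nc hs.
rewrite -sum1_card (partition_big_imset (phi q)) /=.
apply: leq_trans (_ : \sum_(b in phi q @: A) (k.-1 * k.-1 + (if k <= #|cols q A b| then q * q else 0)
                 + (if k <= #|rows q A b| then q * q else 0)) <= _).
  apply: leq_sum => b _; rewrite sum1_card.
  apply: leq_trans (@Ab_bound k q N A b k0 q0); apply: subset_leq_card.
  by apply/subsetP => a; rewrite !inE.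
rewrite !big_split /= !sum_if sum_nat_const mulnC -addnA leq_add2l mul2n -addnn.
apply: leq_add; rewrite mulnC leq_mul2l; apply/orP; right.
  by apply: (@wide_all k p q N A s k0 q0 nc) => b /hs /andP[].
by apply: (@tall_all k p q N A s k0 q0 nc) => b /hs /andP[].
Qed.

Lemma arithMT k W t s : 2 <= k -> k * k <= t -> k * k * t <= s ->
  k.-1 * k.-1 * (W * (k * k * (k * k)) * (t + 1)) + W * (t + 1) <= W * (k * k * (k * k)) * s.
Proof.
move=> hk ht hs.
set M := k * k * (k * k).
have e : k.-1 * k.-1 * (W * M * (t + 1)) + W * (t + 1) = W * (k.-1 * k.-1 * M * (t + 1) + (t + 1)).
  by rewrite /M; nia.
rewrite e -[W * M * s]mulnA leq_mul2l; apply/orP; right.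
have hM : 4 <= k * k by nia.
have hM2 : k * k <= M by rewrite /M; nia.
have h1 : k.-1 * k.-1 + 2 * k.-1 + 1 = k * k by nia.
apply: leq_trans (_ : M * (k * k * t) <= _); last by rewrite leq_mul2l hs orbT.
nia.
Qed.

Lemma MT k : 2 <= k -> exists c, forall (p : {perm 'I_k}) s N (A : {set 'I_N * 'I_N}),
  (forall a, a \in A -> (a.1 < s) && (a.2 < s)) -> ~~ cont p A -> #|A| <= c * s.
Proof.
move=> hk; set q := k * k; set W := 2 * (q * q * (k.-1 * 2 ^ q)).
have k0 : 0 < k by apply: leq_trans hk.
have q4 : 4 <= q by rewrite /q; nia.
have q0 : 0 < q by apply: leq_trans q4.
have k1 : 0 < k.-1 by lia.
have e2 := expn_gt0 2 q.
have W1 : 0 < W by rewrite /W; nia.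
exists (W * (q * q)) => p s; elim/ltn_ind: s => s IH N A hA nc.
case: (ltnP s (q * q)) => hs.
  set R := [set x : 'I_N | x < s].
  have sub : A \subset setX R R.
    by apply/subsetP => a aA; have /andP[h1 h2] := hA a aA; rewrite !inE h1 h2.
  have hR : #|R| <= s by apply: card_lt => x; rewrite inE.
  apply: leq_trans (subset_leq_card sub) _; rewrite cardsX.
  apply: leq_trans (leq_mul hR hR) _; apply: leq_trans (_ : q * q * s <= _).
    by rewrite leq_mul2r ltnW ?orbT.
  by rewrite leq_mul2r leq_pmull ?orbT.
set t := s %/ q.
have hts : t * q <= s by exact: leq_trunc_div.
have hqt : q <= t by rewrite -(mulnK q q0) /t leq_div2r.
have hs' : t.+1 < s by nia.
have hB : forall b, b \in phi q @: A -> (b.1 < t.+1) && (b.2 < t.+1).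
  move=> b /imsetP[a aA ->]; have /andP[h1 h2] := hA a aA.
  by rewrite /= !ltnS /t !leq_div2r // ltnW.
have IHB := IH t.+1 hs' N _ hB (contra (@cont_phi k p q N A) nc).
have st := MT_step k0 q0 nc hB.
apply: leq_trans st _.
have := @arithMT k W t s hk hqt; rewrite -/q mulnC => /(_ hts) ha.
apply: leq_trans ha; apply: leq_add.
  rewrite -addn1 in IHB; rewrite leq_mul2l; apply/orP; right; by apply: leq_trans IHB _.
by rewrite /W addn1 !mulnA.
Qed.

Definition Av k (p : {perm 'I_k}) N s : {set {set 'I_N * 'I_N}} :=
  [set A : {set 'I_N * 'I_N} | [forall a in A, (a.1 < s) && (a.2 < s)] && ~~ cont p A].

Definition enc N (A : {set 'I_N * 'I_N}) : {ffun 'I_N * 'I_N -> {set 'I_2 * 'I_2}} :=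
  [ffun b => [set d : 'I_2 * 'I_2 | [exists a in A,
     [&& phi 2 a == b, a.1 %% 2 == d.1 & a.2 %% 2 == d.2]]]].

Lemma enc_sub N (A A' : {set 'I_N * 'I_N}) : enc A = enc A' -> A \subset A'.
Proof.
move=> e; apply/subsetP => a aA.
have : (Ordinal (ltn_pmod a.1 (isT : 0 < 2)), Ordinal (ltn_pmod a.2 (isT : 0 < 2))) \in enc A (phi 2 a).
  by rewrite ffunE inE; apply/existsP; exists a; rewrite aA !eqxx.
rewrite e ffunE inE => /existsP[a' /and4P[a'A /eqP ep /eqP /= e1 /eqP /= e2]].
have h1 : a'.1 %/ 2 = a.1 %/ 2 by move: ep => [].
have h2 : a'.2 %/ 2 = a.2 %/ 2 by move: ep => [].
have ea : a' = a.
  move: a'A e1 e2 h1 h2 {ep}; case: a' => x' y' /= _ e1 e2 h1 h2.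
  rewrite [a]surjective_pairing; congr (_, _); apply: val_inj => /=.
    by rewrite (divn_eq x' 2) (divn_eq a.1 2) h1 e1.
  by rewrite (divn_eq y' 2) (divn_eq a.2 2) h2 e2.
by rewrite -ea.
Qed.

Lemma lexp2r m n e : m <= n -> m ^ e <= n ^ e.
Proof. by move=> h; elim: e => // e IH; rewrite !expnS leq_mul. Qed.

Lemma Klazar k : 2 <= k -> exists D, forall (p : {perm 'I_k}) s N, #|Av p N s| <= D ^ s.
Proof.
move=> hk; have [c hc] := MT hk.
set c' := c.+1; set E := #|{set 'I_2 * 'I_2}|; set G := 16 * E.
have E0 : 0 < E by apply/card_gt0P; exists set0.
have G16 : 16 <= G by rewrite /G leq_pmulr.
have G0 : 0 < G by apply: leq_trans G16.
have c0 : 0 < c' by [].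
exists (G ^ (3 * c')) => p s; elim/ltn_ind: s => s IH N.
case: (ltnP s 3) => hs.
  set R := [set x : 'I_N | x < s].
  have sub : Av p N s \subset powerset (setX R R).
    apply/subsetP => A; rewrite !inE => /andP[/forallP h _]; apply/subsetP => a aA.
    by have := h a; rewrite aA /= => /andP[h1 h2]; rewrite !inE h1 h2.
  have hR : #|R| <= s by apply: card_lt => x; rewrite inE.
  apply: leq_trans (subset_leq_card sub) _; rewrite card_powerset cardsX.
  apply: leq_trans (_ : 2 ^ (s * s) <= _); first by rewrite leq_pexp2l // leq_mul.
  apply: leq_trans (_ : 2 ^ (4 * s) <= _); first by rewrite leq_pexp2l //; nia.
  rewrite expnM; apply: lexp2r; apply: (@leq_trans G); first exact: G16.
  by rewrite -{1}(expn1 G) leq_pexp2l.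
set s' := (s %/ 2).+1.
have hs' : s' < s by rewrite /s'; have := leq_trunc_div s 2; nia.
have key : forall A, A \in Av p N s -> phi 2 @: A \in Av p N s'.
  move=> A; rewrite !inE => /andP[/forallP h nc]; apply/andP; split.
    apply/forallP => b; apply/implyP => /imsetP[a aA ->].
    have := h a; rewrite aA /= => /andP[h1 h2].
    by rewrite !ltnS !leq_div2r // ltnW.
  exact: contra (@cont_phi k p 2 N A) nc.
apply: leq_trans (pigeon (D := Av p N s) (f := fun A : {set 'I_N * 'I_N} => phi 2 @: A) (m := E ^ (c' * s')) _) _.
  move=> B; set F := [set x in _ | _].
  case: (set_0Vmem F) => [-> | [A0]]; first by rewrite cards0.
  rewrite inE => /andP[A0in /eqP eB].
  have BA : B \in Av p N s' by rewrite -eB key.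
  have hB : #|B| <= c' * s'.
    move: BA; rewrite inE => /andP[/forallP h nc].
    apply: leq_trans (hc p s' N B _ nc) _; last by rewrite leq_mul2r leqnSn orbT.
    by move=> a aB; have := h a; rewrite aB.
  have inj : {in F &, injective (@enc N)}.
    by move=> A A' _ _ e; apply/eqP; rewrite eqEsubset !enc_sub.
  rewrite -(card_in_imset inj).
  have sub : (@enc N) @: F \subset pffun_on set0 B setT.
    apply/subsetP => g /imsetP[A AF ->]; move: AF; rewrite !inE => /andP[_ /eqP eA].
    apply/pffun_onP; split; last by move=> x _; rewrite inE.
    apply/subsetP => b; rewrite inE ffunE; case/set0Pn => d; rewrite inE.
    by case/existsP => a /and4P[aA /eqP <- _ _]; rewrite -eA imset_f.
  apply: leq_trans (subset_leq_card sub) _; rewrite card_pffun_on cardsT -/E.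
  by rewrite leq_pexp2l.
have himg : #|[set phi 2 @: A | A : {set 'I_N * 'I_N} in Av p N s]| <= (G ^ (3 * c')) ^ s'.
  apply: leq_trans (IH s' hs' N); apply: subset_leq_card.
  by apply/subsetP => B /imsetP[A /key hA ->].
apply: leq_trans (leq_mul (leqnn _) himg) _.
rewrite -!expnM.
apply: leq_trans (_ : G ^ (c' * s') * G ^ (3 * c' * s') <= _).
  by rewrite leq_mul2r; apply/orP; right; apply: lexp2r; rewrite /G leq_pmull.
rewrite -expnD leq_pexp2l //.
rewrite /s'; have := leq_trunc_div s 2; nia.
Qed.

Definition Mx m (sg tau : {perm 'I_m}) : {set 'I_m * 'I_m} := [set (sg x, tau x) | x : 'I_m].

Lemma Mx_inj m (sg t1 t2 : {perm 'I_m}) : Mx sg t1 = Mx sg t2 -> t1 = t2.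
Proof.
move=> e; apply/permP => x.
have : (sg x, t1 x) \in Mx sg t2 by rewrite -e imset_f.
case/imsetP => y _ [/perm_inj <-] //.
Qed.

Lemma pboolP (P : Prop) : pbool P -> P.
Proof. by rewrite /pbool; case: excluded_middle_informative. Qed.

Lemma incr_inj k N (r : 'I_k -> 'I_N) : incr r -> injective r.
Proof.
move=> hr x y e; apply: val_inj; case: (ltngtP x y) => // h;
  by have := hr _ _ h; rewrite e ltnn.
Qed.

Lemma avoid_pair k (T : {ffun 'I_2 -> {perm 'I_k}}) (Gamma : config -> Prop) n m
  (P : election n m) (a b : 'I_n) :
  Gamma (@Config 2 k T) -> avoids_all Gamma P -> a != b ->
  ~~ cont ((T ord0)^-1 * T ord_max)%g (Mx (P a) (P b)).
Proof.
move=> GC av ab; apply/negP => /contE [r [c [hr [hc hM]]]].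
have : forall i, exists x, (P a x, P b x) == (r i, c (((T ord0)^-1 * T ord_max)%g i)).
  by move=> i; have /imsetP[x _ e] := hM i; exists x; rewrite -e.
case/fin_all_exists => xx hx.
have e1 : forall y, P a (xx (T ord0 y)) = r (T ord0 y).
  by move=> y; have /eqP [-> _] := hx (T ord0 y).
have e2 : forall y, P b (xx (T ord0 y)) = c (T ord_max y).
  by move=> y; have /eqP [_ ->] := hx (T ord0 y); rewrite permM permK.
apply: (av _ GC).
exists (fun i : 'I_2 => if i == ord0 then a else b), (fun y => xx (T ord0 y)); split; [|split].
- move=> i j; case: (i =P ord0) => [->|/eqP hi]; case: (j =P ord0) => [->|/eqP hj] //=.
  + by move=> e; exfalso; move/eqP: ab; apply; rewrite e.
  + by move=> e; exfalso; move/eqP: ab; apply; rewrite e.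
  + move=> _; apply: val_inj; move: hi hj; case: i => [[|[|i]] hi] //; case: j => [[|[|j]] hj] //.
- move=> y y' e; apply: (@perm_inj _ (T ord0)); apply: (incr_inj hr).
  by rewrite -!e1 e.
- move=> i x y xy /=; rewrite /ranks_above.
  case: (i =P ord0) => [->|/eqP hi].
    by rewrite !e1 => h; apply: hr.
  have -> : i = ord_max by apply: val_inj; move: hi; case: i => [[|[|i]] hi].
  by rewrite !e2 => h; apply: hc.
Qed.

Theorem mainTheorem4 :
  forall k : nat, (2 <= k)%N ->
  exists c : nat,
    forall Gamma : config -> Prop,
      (exists C : config, Gamma C /\ cfg_l C = 2 /\ cfg_k C = k) ->
      forall n m : nat, (0 < n)%N -> (0 < m)%N ->
        (a_count n m Gamma <= m`! * c ^ ((n - 1) * m))%N.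
Proof.
move=> k hk; have [D hD] := Klazar hk; exists D.
move=> Gamma [[l k' T] [GC [/= hl hk']]] n m n0 m0.
subst l k'.
set pi := ((T ord0)^-1 * T ord_max)%g.
case: n n0 => [//|n'] _.
set S := [set P : election n'.+1 m | pbool (avoids_all Gamma P)].
pose F (P : election n'.+1 m) :=
  (P ord0, [ffun j : 'I_n' => Mx (P ord0) (P (lift ord0 j))]).
have inj : injective F.
  move=> P P' [e0 /ffunP ef]; apply/ffunP => i.
  case: (unliftP ord0 i) => [j ->|->] //.
  by have := ef j; rewrite !ffunE e0 => /Mx_inj.
rewrite /a_count -/S -(card_imset _ inj).
have sub : F @: S \subset setX [set: {perm 'I_m}] [set g | g \in ffun_on (mem (Av pi m m))].
  apply/subsetP => x /imsetP[P]; rewrite inE => /pboolP av ->.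
  rewrite !inE /=; apply/ffun_onP => j; rewrite ffunE inE; apply/andP; split.
    by apply/forallP => a; apply/implyP => _; rewrite !ltn_ord.
  by apply: (avoid_pair GC av); exact: neq_lift.
apply: leq_trans (subset_leq_card sub) _.
rewrite cardsX cardsT card_Sn cardsE card_ffun_on card_ord leq_mul2l; apply/orP; right.
rewrite subSS subn0 mulnC expnM; apply: lexp2r; exact: hD.
Qed.
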